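(* Let $m\ge1$ and let $\phi\in C^\infty(\mathbb R^2)$ satisfy, for some $C>0$ and all $z\in\mathbb R^2$, $|D^3\phi(z)|\le C|z|^{2m-1}$, $|D^2\phi(z)|\le C|z|^{2m}$, $|D\phi(z)|\le C|z|^{2m+1}$. There exist constants $C_2>1$ and $\varepsilon_0,\varepsilon_2\in(0,1)$ such that for every $z\ne0$ there is a unit vector $u\in\mathbb S^1\subset\mathbb R^2$ such that for every $r\in(0,\varepsilon_0|z|)$ one has $B_{\mathrm{Eucl}}(z+\tfrac r2u,\varepsilon_2 r)\subset B_{\mathrm{Eucl}}(z,r)$ and $$|M(\zeta-z)|\ge C_2^{-1}|z|^{2m}r$$ for every $\zeta\in B_{\mathrm{Eucl}}(z+\tfrac r2u,\varepsilon_2r)$ and every matrix $M$ of the form $$M=\begin{bmatrix}\phi_{xx}(z')-2m|z|^{2m-2}xy & \phi_{xy}(z')-|z|^{2m-2}(|z|^2+2my^2)\\ \phi_{xy}(z'')+|z|^{2m-2}(|z|^2+2mx^2) & \phi_{yy}(z'')+2m|z|^{2m-2}xy\end{bmatrix},\qquad z=(x,y),$$ with $z',z''$ arbitrary points of the segment $[z,\zeta]$.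
   Context: $B_{\mathrm{Eucl}}(w,\rho)$ denotes the Euclidean disk in $\mathbb R^2$ of center $w$ and radius $\rho$. $|D^k\phi(z)|$ is the maximum of the absolute values of all $k$-th order partial derivatives of $\phi$ at $z$. *)

(* Defs.v *)
From Stdlib Require Import Reals Lra List.
Open Scope R_scope.

(* Points of R^2 are handled as pairs of coordinates (x, y); functions
   R^2 -> R are curried: f : R -> R -> R. *)

Definition norm2 (a b : R) : R := sqrt (a ^ 2 + b ^ 2).

Definition continuous2 (f : R -> R -> R) : Prop :=
  forall x y eps, 0 < eps -> exists delta, 0 < delta /\
    forall x' y', norm2 (x' - x) (y' - y) < delta ->
      Rabs (f x' y' - f x y) < eps.

Definition is_partial (b : bool) (f g : R -> R -> R) : Prop :=
  if b then forall x y, derivable_pt_lim (fun t => f t y) x (g x y)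
  else forall x y, derivable_pt_lim (fun t => f x t) y (g x y).

Fixpoint Ck (k : nat) (f : R -> R -> R) : Prop :=
  match k with
  | O => continuous2 f
  | S k' => continuous2 f /\
      exists fx fy, is_partial true f fx /\ is_partial false f fy /\
                    Ck k' fx /\ Ck k' fy
  end.

Definition smooth2 (f : R -> R -> R) : Prop := forall k, Ck k f.

(* E.g. iter_partial [true; false] f g means g = (f_x)_y = f_xy. *)
Inductive iter_partial : list bool -> (R -> R -> R) -> (R -> R -> R) -> Prop :=
| ip_nil f : iter_partial nil f f
| ip_cons b l f h g : is_partial b f h -> iter_partial l h g ->
                      iter_partial (b :: l) f g.

(* |D^k f(x,y)| <= B, i.e. every k-th order partial derivative is bounded by B
   in absolute value at (x,y). *)
Definition Dk_le (k : nat) (f : R -> R -> R) (x y B : R) : Prop :=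
  forall l g, length l = k -> iter_partial l f g -> Rabs (g x y) <= B.

(* Main.v *)
Require Import Defs.
From Stdlib Require Import Reals List Lra Lia FunctionalExtensionality.
Open Scope R_scope.

Lemma norm2_nonneg a b : 0 <= norm2 a b.
Proof. unfold norm2; apply sqrt_pos. Qed.

Lemma norm2_sq a b : norm2 a b ^ 2 = a ^ 2 + b ^ 2.
Proof. unfold norm2; apply pow2_sqrt; nra. Qed.

Lemma norm2_lt a b e : norm2 a b < e -> a ^ 2 + b ^ 2 < e ^ 2.
Proof. intros H. rewrite <- norm2_sq. pose proof (norm2_nonneg a b). nra. Qed.

Lemma norm2_lt_of a b e : 0 < e -> a ^ 2 + b ^ 2 < e ^ 2 -> norm2 a b < e.
Proof. intros He H. rewrite <- norm2_sq in H. pose proof (norm2_nonneg a b).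
  destruct (Rlt_or_le (norm2 a b) e); auto. nra. Qed.

Lemma norm2_le_of a b e : 0 <= e -> a ^ 2 + b ^ 2 <= e ^ 2 -> norm2 a b <= e.
Proof. intros He H. rewrite <- norm2_sq in H. pose proof (norm2_nonneg a b).
  destruct (Rle_or_lt (norm2 a b) e); auto. nra. Qed.

Lemma abs_le_norm2_l a b : Rabs a <= norm2 a b.
Proof. pose proof (norm2_sq a b). pose proof (norm2_nonneg a b).
  pose proof (pow2_abs a). pose proof (Rabs_pos a).
  destruct (Rle_or_lt (Rabs a) (norm2 a b)); auto. nra. Qed.

Lemma abs_le_norm2_r a b : Rabs b <= norm2 a b.
Proof. pose proof (norm2_sq a b). pose proof (norm2_nonneg a b).
  pose proof (pow2_abs b). pose proof (Rabs_pos b).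
  destruct (Rle_or_lt (Rabs b) (norm2 a b)); auto. nra. Qed.

Lemma abs_lt_of_sq a b e : 0 < e -> a ^ 2 + b ^ 2 < e ^ 2 -> Rabs a < e /\ Rabs b < e.
Proof. intros He H. pose proof (pow2_abs a). pose proof (pow2_abs b).
  pose proof (Rabs_pos a). pose proof (Rabs_pos b). split.
  - destruct (Rlt_or_le (Rabs a) e); auto. nra.
  - destruct (Rlt_or_le (Rabs b) e); auto. nra. Qed.

Lemma partial_unique b f g1 g2 : is_partial b f g1 -> is_partial b f g2 -> g1 = g2.
Proof. intros H1 H2. apply functional_extensionality; intro x.
  apply functional_extensionality; intro y. destruct b; simpl in *;
  eapply uniqueness_limite; eauto. Qed.

Lemma ip2 b1 b2 f g : iter_partial (b1 :: b2 :: nil) f g ->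
  exists h, is_partial b1 f h /\ is_partial b2 h g.
Proof. intros H. inversion H; subst. match goal with H : iter_partial _ _ _ |- _ =>
  inversion H; subst end. match goal with H : iter_partial nil _ _ |- _ =>
  inversion H; subst end. eauto. Qed.

Lemma mvt_abs (f f' : R -> R) a b B :
  (forall t, derivable_pt_lim f t (f' t)) ->
  (forall t, Rabs (t - a) <= Rabs (b - a) -> Rabs (f' t) <= B) ->
  Rabs (f b - f a) <= B * Rabs (b - a).
Proof. intros Hd Hb. destruct (total_order_T a b) as [[Hab|Hab]|Hab].
  - destruct (MVT_cor2 f f' a b Hab (fun c _ => Hd c)) as [c [Hc Hc2]].
    rewrite Hc, Rabs_mult. apply Rmult_le_compat_r. apply Rabs_pos.
    apply Hb. rewrite !Rabs_right; lra.
  - subst. replace (f b - f b) with (0 * 0) by ring. rewrite Rabs_mult, Rabs_R0.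
    replace (b - b) with 0 by ring. rewrite Rabs_R0. lra.
  - destruct (MVT_cor2 f f' b a Hab (fun c _ => Hd c)) as [c [Hc Hc2]].
    replace (f b - f a) with (- (f a - f b)) by ring.
    rewrite Rabs_Ropp, Hc, Rabs_mult. replace (a - b) with (- (b - a)) by ring.
    rewrite Rabs_Ropp. apply Rmult_le_compat_r. apply Rabs_pos.
    apply Hb. rewrite Rabs_left, Rabs_left; lra. Qed.

Lemma incr2 g gx gy x y x1 y1 B :
  is_partial true g gx -> is_partial false g gy ->
  (forall a b, Rabs (a - x) <= Rabs (x1 - x) -> Rabs (b - y) <= Rabs (y1 - y) ->
     Rabs (gx a b) <= B /\ Rabs (gy a b) <= B) ->
  Rabs (g x1 y1 - g x y) <= B * (Rabs (x1 - x) + Rabs (y1 - y)).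
Proof. intros Hx Hy Hb. simpl in Hx, Hy.
  assert (H1 : Rabs (g x1 y1 - g x1 y) <= B * Rabs (y1 - y)).
  { apply (mvt_abs (fun t => g x1 t) (fun t => gy x1 t)). intro; apply Hy.
    intros t Ht. apply (Hb x1 t); auto. lra. }
  assert (H2 : Rabs (g x1 y - g x y) <= B * Rabs (x1 - x)).
  { apply (mvt_abs (fun t => g t y) (fun t => gx t y)). intro; apply Hx.
    intros t Ht. apply (Hb t y); auto. replace (y - y) with 0 by ring.
    rewrite Rabs_R0. apply Rabs_pos. }
  replace (g x1 y1 - g x y) with ((g x1 y1 - g x1 y) + (g x1 y - g x y)) by ring.
  eapply Rle_trans. apply Rabs_triang. lra. Qed.

Lemma final_ineq N r e2 d e w1 w2 d1 d2 K E :
  0 < N -> 0 < r -> N <= Rabs d -> Rabs e <= K * N -> 0 <= K -> K * e2 <= /8 ->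
  e2 <= /8 -> 0 < e2 -> Rabs w1 < e2 * r -> Rabs w2 < e2 * r ->
  Rabs d1 <= E -> Rabs d2 <= E -> 2 * E * r <= /8 * N * r ->
  /8 * N * r <= Rabs ((d + d1) * (r / 2 + w1) + (e + d2) * w2).
Proof. intros. 
  assert (Hv : r/2 - e2 * r <= Rabs (r/2 + w1) <= r).
  { assert (e2 * r <= r / 8) by nra. revert H7; split_Rabs; intros; split; lra. }
  assert (T1 : N * (r/2 - e2 * r) <= Rabs (d * (r/2 + w1))).
  { rewrite Rabs_mult. apply Rmult_le_compat; nra. }
  assert (T2 : Rabs (d1 * (r/2 + w1)) <= E * r).
  { rewrite Rabs_mult. apply Rmult_le_compat; try apply Rabs_pos; lra. }
  assert (T3 : Rabs (e * w2) <= K * N * (e2 * r)).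
  { rewrite Rabs_mult. apply Rmult_le_compat; try apply Rabs_pos; lra. }
  assert (T4 : Rabs (d2 * w2) <= E * r).
  { rewrite Rabs_mult. apply Rmult_le_compat; try apply Rabs_pos; nra. }
  assert (T3' : K * N * (e2 * r) <= /8 * N * r).
  { replace (K * N * (e2 * r)) with ((K * e2) * (N * r)) by ring.
    replace (/8 * N * r) with (/8 * (N * r)) by ring.
    apply Rmult_le_compat_r; nra. }
  replace ((d + d1) * (r / 2 + w1) + (e + d2) * w2) with
    (d * (r/2 + w1) + (d1 * (r/2 + w1) + (e * w2 + d2 * w2))) by ring.
  assert (N * (e2 * r) <= /8 * N * r) by (assert (0 < N * r) by nra; nra).
  revert T1 T2 T3 T4. generalize (d * (r/2 + w1)) (d1 * (r/2 + w1)) (e * w2) (d2 * w2).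
  intros A1 A2 A3 A4. split_Rabs; intros; lra. Qed.

Lemma ball1 a b r e2 : 0 < r -> 0 < e2 <= /8 -> a ^ 2 + b ^ 2 < (e2 * r) ^ 2 ->
  (a + r / 2) ^ 2 + b ^ 2 < r ^ 2.
Proof. intros Hr He H. destruct (abs_lt_of_sq a b (e2 * r)) as [Ha _]; [nra|auto|].
  assert (e2 * r <= r / 8) by nra. assert ((e2*r)^2 <= (r/8)^2) by (apply pow_incr; split; nra).
  assert (a < r / 8) by (revert Ha; split_Rabs; intros; lra).
  assert (a * r < r * r / 8) by nra.
  nra. Qed.

Lemma cross_bound M k x y : 0 <= M -> 0 <= k ->
  Rabs (2 * M * k * x * y) <= M * (k * (x ^ 2 + y ^ 2)).
Proof. intros HM Hk. assert (0 <= M * k) by nra.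
  assert (0 <= M * k * (x + y) ^ 2) by (apply Rmult_le_pos; [auto| apply pow2_ge_0]).
  assert (0 <= M * k * (x - y) ^ 2) by (apply Rmult_le_pos; [auto| apply pow2_ge_0]).
  split_Rabs; nra. Qed.

Lemma eps2_facts K : 0 <= K -> K * / (8 * (K + 1)) <= / 8 /\ / (8 * (K + 1)) <= / 8
  /\ 0 < / (8 * (K + 1)) /\ / (8 * (K + 1)) < 1.
Proof. intros HK. assert (Hp : 0 < 8 * (K + 1)) by lra.
  pose proof (Rinv_0_lt_compat _ Hp). pose proof (Rinv_r _ (Rgt_not_eq _ _ Hp)).
  set (u := / (8 * (K + 1))) in *. repeat split; nra. Qed.

Lemma eps0_facts A : 0 <= A -> 32 * A * / (32 * A + 4) <= 1 /\ / (32 * A + 4) <= / 4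
  /\ 0 < / (32 * A + 4) /\ / (32 * A + 4) < 1.
Proof. intros HK. assert (Hp : 0 < 32 * A + 4) by lra.
  pose proof (Rinv_0_lt_compat _ Hp). pose proof (Rinv_r _ (Rgt_not_eq _ _ Hp)).
  set (u := / (32 * A + 4)) in *. repeat split; nra. Qed.

Lemma ip3c b1 b2 b3 f g1 g2 g3 : is_partial b1 f g1 -> is_partial b2 g1 g2 ->
  is_partial b3 g2 g3 -> iter_partial (b1 :: b2 :: b3 :: nil) f g3.
Proof. intros. repeat (econstructor; eauto). Qed.

Lemma ip2c b1 b2 f g1 g2 : is_partial b1 f g1 -> is_partial b2 g1 g2 ->
  iter_partial (b1 :: b2 :: nil) f g2.
Proof. intros. repeat (econstructor; eauto). Qed.

Lemma near_norm a b x y r n : Rabs (a - x) <= r -> Rabs (b - y) <= r ->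
  Rabs x <= n -> Rabs y <= n -> 0 <= r <= n / 4 -> x ^ 2 + y ^ 2 = n ^ 2 ->
  a ^ 2 + b ^ 2 <= (2 * n) ^ 2.
Proof. intros Ha Hb Hx Hy Hr Hn.
  assert (Ha' : Rabs a <= Rabs x + r).
  { replace a with (x + (a - x)) by ring. eapply Rle_trans; [apply Rabs_triang|lra]. }
  assert (Hb' : Rabs b <= Rabs y + r).
  { replace b with (y + (b - y)) by ring. eapply Rle_trans; [apply Rabs_triang|lra]. }
  assert (A1 : a ^ 2 <= (Rabs x + r) ^ 2).
  { rewrite <- pow2_abs. apply pow_incr. split; [apply Rabs_pos|lra]. }
  assert (B1 : b ^ 2 <= (Rabs y + r) ^ 2).
  { rewrite <- pow2_abs. apply pow_incr. split; [apply Rabs_pos|lra]. }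
  pose proof (pow2_abs x). pose proof (pow2_abs y).
  pose proof (Rabs_pos x). pose proof (Rabs_pos y).
  assert (r * Rabs x <= r * n) by (apply Rmult_le_compat_l; lra).
  assert (r * Rabs y <= r * n) by (apply Rmult_le_compat_l; lra).
  assert (r * r <= n * n) by nra.
  assert (r * n <= n * n / 4) by nra.
  nra. Qed.

Theorem proposition3p5
  (m : nat) (hm : (1 <= m)%nat)
  (phi : R -> R -> R) (hphi : smooth2 phi)
  (C : R) (hC : 0 < C)
  (hD3 : forall x y, Dk_le 3 phi x y (C * norm2 x y ^ (2 * m - 1)))
  (hD2 : forall x y, Dk_le 2 phi x y (C * norm2 x y ^ (2 * m)))
  (hD1 : forall x y, Dk_le 1 phi x y (C * norm2 x y ^ (2 * m + 1)))
  (phixx phixy phiyy : R -> R -> R)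
  (hxx : iter_partial (true :: true :: nil) phi phixx)
  (hxy : iter_partial (true :: false :: nil) phi phixy)
  (hyy : iter_partial (false :: false :: nil) phi phiyy) :
  exists C2 eps0 eps2, 1 < C2 /\ 0 < eps0 < 1 /\ 0 < eps2 < 1 /\
    forall x y, (x, y) <> (0, 0) ->
    exists u1 u2, norm2 u1 u2 = 1 /\
      forall r, 0 < r < eps0 * norm2 x y ->
        (forall p q,
           norm2 (p - (x + r / 2 * u1)) (q - (y + r / 2 * u2)) < eps2 * r ->
           norm2 (p - x) (q - y) < r) /\
        (forall p q,
           norm2 (p - (x + r / 2 * u1)) (q - (y + r / 2 * u2)) < eps2 * r ->
           forall t' t'', 0 <= t' <= 1 -> 0 <= t'' <= 1 ->
           let x' := x + t' * (p - x) in let y' := y + t' * (q - y) in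
           let x'' := x + t'' * (p - x) in let y'' := y + t'' * (q - y) in
           let n := norm2 x y in
           let M11 := phixx x' y' - 2 * INR m * n ^ (2 * m - 2) * x * y in
           let M12 := phixy x' y' - n ^ (2 * m - 2) * (n ^ 2 + 2 * INR m * y ^ 2) in
           let M21 := phixy x'' y'' + n ^ (2 * m - 2) * (n ^ 2 + 2 * INR m * x ^ 2) in
           let M22 := phiyy x'' y'' + 2 * INR m * n ^ (2 * m - 2) * x * y in
           / C2 * n ^ (2 * m) * r <=
             norm2 (M11 * (p - x) + M12 * (q - y))
                   (M21 * (p - x) + M22 * (q - y))).
Proof.
  pose proof (hphi 3%nat) as H3.
  destruct H3 as [_ [fx [fy [Hfx [Hfy [Cfx Cfy]]]]]].
  destruct Cfx as [_ [fxx [fxy [Hfxx [Hfxy [Cfxx Cfxy]]]]]].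
  destruct Cfy as [_ [fyx [fyy [Hfyx [Hfyy [_ Cfyy]]]]]].
  destruct Cfxx as [_ [fxxx [fxxy [Hfxxx [Hfxxy _]]]]].
  destruct Cfxy as [_ [fxyx [fxyy [Hfxyx [Hfxyy _]]]]].
  destruct Cfyy as [_ [fyyx [fyyy [Hfyyx [Hfyyy _]]]]].
  destruct (ip2 _ _ _ _ hxx) as [h1 [Hh1 Hh1']].
  pose proof (partial_unique _ _ _ _ Hh1 Hfx); subst h1.
  pose proof (partial_unique _ _ _ _ Hh1' Hfxx); subst phixx.
  destruct (ip2 _ _ _ _ hxy) as [h1 [Hh2 Hh2']].
  pose proof (partial_unique _ _ _ _ Hh2 Hfx); subst h1.
  pose proof (partial_unique _ _ _ _ Hh2' Hfxy); subst phixy.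
  destruct (ip2 _ _ _ _ hyy) as [h1 [Hh3 Hh3']].
  pose proof (partial_unique _ _ _ _ Hh3 Hfy); subst h1.
  pose proof (partial_unique _ _ _ _ Hh3' Hfyy); subst phiyy.
  assert (D3 : forall l g a b, iter_partial l phi g -> length l = 3%nat ->
     Rabs (g a b) <= C * norm2 a b ^ (2 * m - 1)) by (intros; eapply hD3; eauto).
  assert (Bxx : forall a b, Rabs (fxxx a b) <= C * norm2 a b ^ (2 * m - 1) /\
                            Rabs (fxxy a b) <= C * norm2 a b ^ (2 * m - 1)).
  { intros; split; [eapply (D3 (true :: true :: true :: nil))|eapply (D3 (true :: true :: false :: nil))]; try reflexivity; eapply ip3c; eassumption. }
  assert (Bxy : forall a b, Rabs (fxyx a b) <= C * norm2 a b ^ (2 * m - 1) /\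
                            Rabs (fxyy a b) <= C * norm2 a b ^ (2 * m - 1)).
  { intros; split; [eapply (D3 (true :: false :: true :: nil))|eapply (D3 (true :: false :: false :: nil))]; try reflexivity; eapply ip3c; eassumption. }
  assert (Byy : forall a b, Rabs (fyyx a b) <= C * norm2 a b ^ (2 * m - 1) /\
                            Rabs (fyyy a b) <= C * norm2 a b ^ (2 * m - 1)).
  { intros; split; [eapply (D3 (false :: false :: true :: nil))|eapply (D3 (false :: false :: false :: nil))]; try reflexivity; eapply ip3c; eassumption. }
  remember (2 ^ (2 * m - 1)) as Q eqn:HQ.
  assert (HQp : 0 < Q) by (subst; apply pow_lt; lra).
  assert (HCQ : 0 <= C * Q) by nra.
  destruct (eps0_facts (C * Q) HCQ) as [E01 [E02 [E03 E04]]].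
  assert (HmR : 0 <= INR m) by apply pos_INR.
  assert (HK : 0 <= C + INR m) by lra.
  destruct (eps2_facts (C + INR m) HK) as [E21 [E22 [E23 E24]]].
  exists 8, (/ (32 * (C * Q) + 4)), (/ (8 * (C + INR m + 1))).
  split; [lra|]. split; [lra|]. split; [lra|].
  set (eps0 := / (32 * (C * Q) + 4)) in *.
  set (eps2 := / (8 * (C + INR m + 1))) in *.
  intros x y Hxy.
  pose proof (norm2_sq x y) as Hn2.
  pose proof (abs_le_norm2_l x y) as Hxn.
  pose proof (abs_le_norm2_r x y) as Hyn.
  remember (norm2 x y) as n eqn:Hn.
  assert (Hnp : 0 < n).
  { assert (0 <= n) by (subst; apply norm2_nonneg).
    destruct (Req_dec n 0) as [Hz|Hz]; [|lra].
    exfalso; apply Hxy. rewrite Hz in Hn2.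
    assert (x = 0) by nra. assert (y = 0) by nra. subst; reflexivity. }
  assert (HkN : n ^ (2 * m - 2) * n ^ 2 = n ^ (2 * m)).
  { rewrite <- pow_add. f_equal. lia. }
  assert (HkN1 : n ^ (2 * m - 1) * n = n ^ (2 * m)).
  { rewrite <- (pow_1 n) at 2. rewrite <- pow_add. f_equal. lia. }
  assert (HNp : 0 < n ^ (2 * m)) by (apply pow_lt; lra).
  assert (Hkp : 0 <= n ^ (2 * m - 2)) by (apply pow_le; lra).
  assert (Hn1p : 0 <= n ^ (2 * m - 1)) by (apply pow_le; lra).
  assert (Hcross : Rabs (2 * INR m * n ^ (2 * m - 2) * x * y) <= INR m * n ^ (2 * m)).
  { rewrite <- HkN, Hn2. apply cross_bound; auto. }
  assert (HA : Rabs (fxx x y - 2 * INR m * n ^ (2 * m - 2) * x * y) <= (C + INR m) * n ^ (2 * m)).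
  { assert (Rabs (fxx x y) <= C * n ^ (2 * m)).
    { subst n. eapply (hD2 _ _ (true :: true :: nil)); [reflexivity|]. eapply ip2c; eassumption. }
    eapply Rle_trans. apply Rabs_triang. rewrite Rabs_Ropp. lra. }
  assert (HE : Rabs (fyy x y + 2 * INR m * n ^ (2 * m - 2) * x * y) <= (C + INR m) * n ^ (2 * m)).
  { assert (Rabs (fyy x y) <= C * n ^ (2 * m)).
    { subst n. eapply (hD2 _ _ (false :: false :: nil)); [reflexivity|]. eapply ip2c; eassumption. }
    eapply Rle_trans. apply Rabs_triang. lra. }
  assert (Hdelta : forall r p q t, 0 < r < eps0 * n -> Rabs (p - x) < r -> Rabs (q - y) < r ->
     0 <= t <= 1 -> forall g gx gy, is_partial true g gx -> is_partial false g gy ->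
     (forall a b, Rabs (gx a b) <= C * norm2 a b ^ (2 * m - 1) /\
                  Rabs (gy a b) <= C * norm2 a b ^ (2 * m - 1)) ->
     Rabs (g (x + t * (p - x)) (y + t * (q - y)) - g x y) <= C * Q * n ^ (2 * m - 1) * (2 * r)).
  { intros r p q t Hr Hp Hq Ht g gx gy Hgx Hgy Hb.
    assert (Hr4 : r <= n / 4) by nra.
    eapply Rle_trans; [apply (incr2 g gx gy x y _ _ (C * Q * n ^ (2 * m - 1))); auto|].
    - intros a b Ha Hb'.
      replace (x + t * (p - x) - x) with (t * (p - x)) in Ha by ring.
      replace (y + t * (q - y) - y) with (t * (q - y)) in Hb' by ring.
      rewrite Rabs_mult, (Rabs_right t) in Ha, Hb' by lra.
      assert (Ha2 : Rabs (a - x) <= r) by nra.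
      assert (Hb2 : Rabs (b - y) <= r) by nra.
      assert (Hab : norm2 a b <= 2 * n).
      { apply norm2_le_of; [lra|].
        apply (near_norm a b x y r n); auto; lra. }
      assert (Hpw : C * norm2 a b ^ (2 * m - 1) <= C * Q * n ^ (2 * m - 1)).
      { rewrite HQ, Rmult_assoc, <- Rpow_mult_distr. apply Rmult_le_compat_l; [lra|].
        apply pow_incr. split; [apply norm2_nonneg|lra]. }
      destruct (Hb a b); split; lra.
    - replace (x + t * (p - x) - x) with (t * (p - x)) by ring.
      replace (y + t * (q - y) - y) with (t * (q - y)) by ring.
      rewrite !Rabs_mult, (Rabs_right t) by lra.
      apply Rmult_le_compat_l; [nra|]. nra. }
  assert (Herr : forall r, 0 < r < eps0 * n ->
     2 * (C * Q * n ^ (2 * m - 1) * (2 * r)) * r <= / 8 * n ^ (2 * m) * r).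
  { intros r Hr.
    assert (C * Q * n ^ (2 * m - 1) * r <= / 32 * n ^ (2 * m)).
    { apply Rle_trans with (C * Q * n ^ (2 * m - 1) * (eps0 * n)).
      - apply Rmult_le_compat_l; [nra|lra].
      - rewrite <- HkN1. nra. }
    nra. }
  set (D := fxy x y + n ^ (2 * m - 2) * (n ^ 2 + 2 * INR m * x ^ 2)).
  set (Bb := fxy x y - n ^ (2 * m - 2) * (n ^ 2 + 2 * INR m * y ^ 2)).
  assert (Hdb : D - Bb = (2 + 2 * INR m) * n ^ (2 * m)).
  { unfold D, Bb. replace (fxy x y + n ^ (2 * m - 2) * (n ^ 2 + 2 * INR m * x ^ 2) -
      (fxy x y - n ^ (2 * m - 2) * (n ^ 2 + 2 * INR m * y ^ 2))) with
      (n ^ (2 * m - 2) * (2 * n ^ 2 + 2 * INR m * (x ^ 2 + y ^ 2))) by ring.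
    rewrite <- Hn2, <- HkN. ring. }
  destruct (Rle_lt_dec (n ^ (2 * m)) (Rabs D)) as [HD|HD].
  - exists 1, 0. split.
    { unfold norm2. replace (1 ^ 2 + 0 ^ 2) with 1 by ring. apply sqrt_1. }
    intros r Hr. 
    assert (Hball : forall p q, norm2 (p - (x + r / 2 * 1)) (q - (y + r / 2 * 0)) < eps2 * r ->
        (p - x) ^ 2 + (q - y) ^ 2 < r ^ 2).
    { intros p q H. apply norm2_lt in H.
      replace (p - x) with ((p - (x + r / 2 * 1)) + r / 2) by ring.
      replace (q - y) with (q - (y + r / 2 * 0)) by ring.
      apply (ball1 _ _ _ eps2); auto; lra. }
    split.
    { intros p q H. apply norm2_lt_of; [lra|auto]. }
    intros p q H t' t'' Ht' Ht''. cbv zeta.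
    destruct (abs_lt_of_sq (p - x) (q - y) r (proj1 Hr) (Hball p q H)) as [Hpx Hqy].
    destruct (abs_lt_of_sq _ _ (eps2 * r) (Rmult_lt_0_compat _ _ E23 (proj1 Hr)) (norm2_lt _ _ _ H)) as [Hw1 Hw2].
    eapply Rle_trans; [|apply abs_le_norm2_r].
    apply Rle_trans with (Rabs ((D + (fxy (x + t'' * (p - x)) (y + t'' * (q - y)) - fxy x y))
       * (r / 2 + (p - (x + r / 2 * 1))) +
       ((fyy x y + 2 * INR m * n ^ (2 * m - 2) * x * y) +
        (fyy (x + t'' * (p - x)) (y + t'' * (q - y)) - fyy x y)) * (q - (y + r / 2 * 0)))).
    2: { right. f_equal. unfold D. ring. }
    apply (final_ineq _ _ eps2 _ _ _ _ _ _ (C + INR m) (C * Q * n ^ (2 * m - 1) * (2 * r)));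
      auto; try lra.
    + eapply Hdelta; eauto.
    + eapply Hdelta; eauto.
  - assert (HB : n ^ (2 * m) <= Rabs Bb).
    { assert (0 <= INR m * n ^ (2 * m)) by nra. revert HD Hdb. split_Rabs; intros; lra. }
    exists 0, 1. split.
    { unfold norm2. replace (0 ^ 2 + 1 ^ 2) with 1 by ring. apply sqrt_1. }
    intros r Hr. 
    assert (Hball : forall p q, norm2 (p - (x + r / 2 * 0)) (q - (y + r / 2 * 1)) < eps2 * r ->
        (p - x) ^ 2 + (q - y) ^ 2 < r ^ 2).
    { intros p q H. apply norm2_lt in H.
      replace (p - x) with (p - (x + r / 2 * 0)) by ring.
      replace (q - y) with ((q - (y + r / 2 * 1)) + r / 2) by ring.
      rewrite Rplus_comm. apply (ball1 _ _ _ eps2); auto; try lra. }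
    split.
    { intros p q H. apply norm2_lt_of; [lra|auto]. }
    intros p q H t' t'' Ht' Ht''. cbv zeta.
    destruct (abs_lt_of_sq (p - x) (q - y) r (proj1 Hr) (Hball p q H)) as [Hpx Hqy].
    destruct (abs_lt_of_sq _ _ (eps2 * r) (Rmult_lt_0_compat _ _ E23 (proj1 Hr)) (norm2_lt _ _ _ H)) as [Hw1 Hw2].
    eapply Rle_trans; [|apply abs_le_norm2_l].
    apply Rle_trans with (Rabs ((Bb + (fxy (x + t' * (p - x)) (y + t' * (q - y)) - fxy x y))
       * (r / 2 + (q - (y + r / 2 * 1))) +
       ((fxx x y - 2 * INR m * n ^ (2 * m - 2) * x * y) +
        (fxx (x + t' * (p - x)) (y + t' * (q - y)) - fxx x y)) * (p - (x + r / 2 * 0)))).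
    2: { right. f_equal. unfold Bb. ring. }
    apply (final_ineq _ _ eps2 _ _ _ _ _ _ (C + INR m) (C * Q * n ^ (2 * m - 1) * (2 * r)));
      auto; try lra.
    + eapply Hdelta; eauto.
    + eapply Hdelta; eauto.
Qed.
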